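(* Consider the discrete-time LPV system $x_{k+1}=A(p_k)x_k+B(p_k)u_k$ with affine $A(p)=A_0+\sum_{i=1}^{n_p}p_iA_i$, $B(p)=B_0+\sum_{i=1}^{n_p}p_iB_i$, and a data set $\mathcal{D}$ from it such that $\mathcal{D}_p$ has full row rank $(1+n_p)(n_x+n_u)$. Let $K(p)=K_0+\sum_i p_iK_i$ be a given LPV state-feedback controller, $\bar K=[K_1\ \cdots\ K_{n_p}]$, and $$\mathcal{M}_{CL}=\begin{bmatrix} I_{n_x}&0&0\\ 0& I_{n_p}\otimes I_{n_x}&0\\ K_0&\bar K&0\\ 0& I_{n_p}\otimes K_0& I_{n_p}\otimes \bar K\end{bmatrix}.$$ Suppose there exist $P\in\mathbb{S}^{n_x}$ with $P\succ0$, matrices $\mathcal{F}\in\mathbb{R}^{(N_d-1)\times n_x(1+n_p+n_p^2)}$ and $F_Q\in\mathbb{R}^{(N_d-1)(1+n_p)\times n_x(1+n_p)}$ related by $$\mathcal{F}\begin{bmatrix}I_{n_x}\\ p\otimes I_{n_x}\\ p\otimes p\otimes I_{n_x}\end{bmatrix}=\begin{bmatrix}I_{N_d-1}\\ p\otimes I_{N_d-1}\end{bmatrix}^\top F_Q\begin{bmatrix}I_{n_x}\\ p\otimes I_{n_x}\end{bmatrix}\quad\forall p\in\mathbb{P},$$ and a multiplier $\Xi\in\mathbb{S}^{4n_pn_x}$ such that $$\mathcal{M}_{CL}\,\mathrm{blkdiag}(P,\ I_{n_p}\otimes P,\ I_{n_p}\otimes I_{n_p}\otimes P)=\mathcal{D}_p\mathcal{F},$$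 and the full-block LMI conditions (defined in the context) hold with $\Delta(p)=\mathrm{diag}(p)\otimes I_{2n_x}$, $W=\begin{bmatrix}P_0&\mathcal{X}_+F_Q\\ (\mathcal{X}_+F_Q)^\top & P_0\end{bmatrix}$, $P_0=\mathrm{blkdiag}(P,0_{n_xn_p})$, $\mathcal{X}_+=\mathrm{blkdiag}(X_+,I_{n_p}\otimes X_+)$, and $L_{11}=0_{2n_xn_p}$, $L_{12}=1_{n_p}\otimes I_{2n_x}$, $L_{21}=\begin{bmatrix}0_{n_x\times 2n_xn_p}\\ I_{n_p}\otimes[I_{n_x}\ 0]\\ 0_{n_x\times 2n_xn_p}\\ I_{n_p}\otimes[0\ I_{n_x}]\end{bmatrix}$, $L_{22}=\begin{bmatrix}[I_{n_x}\ 0]\\ 1_{n_p}\otimes 0_{n_x\times 2n_x}\\ [0\ I_{n_x}]\\ 1_{n_p}\otimes 0_{n_x\times 2n_x}\end{bmatrix}$. Then $K(p)$ stabilizes the system under the feedback law $u_k=K(p_k)x_k$.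
   Context: Notation: $\otimes$ Kronecker product; $I_n$ identity; $0_{n\times m}$, $0_n$ zero matrices; $1_n\in\mathbb{R}^n$ the all-ones vector; $\mathbb{S}^n$ real symmetric $n\times n$ matrices; $\mathrm{blkdiag}$ block-diagonal concatenation; $\mathrm{diag}(p)$ diagonal matrix with the entries of $p$. The system has fully measured state $x_k\in\mathbb{R}^{n_x}$, input $u_k\in\mathbb{R}^{n_u}$, scheduling $p_k\in\mathbb{P}\subset\mathbb{R}^{n_p}$ with $\mathbb{P}$ compact and convex; $A_i,B_i$ unknown real matrices. $\mathcal{D}=\{u^d_k,p^d_k,x^d_k\}_{k=1}^{N_d}$ is a trajectory of the system; $U=[u^d_1\cdots u^d_{N_d-1}]$, $U^p=[p^d_1\otimes u^d_1\cdots p^d_{N_d-1}\otimes u^d_{N_d-1}]$, $X=[x^d_1\cdots x^d_{N_d-1}]$, $X^p=[p^d_1\otimes x^d_1\cdots p^d_{N_d-1}\otimes x^d_{N_d-1}]$, $X_+=[x^d_2\cdots x^d_{N_d}]$, $\mathcal{D}_p=[X^\top\ (X^p)^\top\ U^\top\ (U^p)^\top]^\top$. ''Stabilizes'' means the closed loop $x_{k+1}=(A(p_k)+B(p_k)K(p_k))x_k$ is asymptotically stable for all scheduling trajectories with values in $\mathbb{P}$. Full-block LMI conditions for given $(\Delta(p),W,L_{11},L_{12},L_{21},L_{22})$ and symmetric multiplier $\Xi$: $\begin{bmatrix}L_{11}&L_{12}\\ I&0\end{bmatrix}^\top\Xi\begin{bmatrix}L_{11}&L_{12}\\ I&0\end{bmatrix}-\begin{bmatrix}L_{21}&L_{22}\end{bmatrix}^\top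 W\begin{bmatrix}L_{21}&L_{22}\end{bmatrix}\prec0$ and $\begin{bmatrix}I\\ \Delta(p)\end{bmatrix}^\top\Xi\begin{bmatrix}I\\ \Delta(p)\end{bmatrix}\succeq0$ for all $p\in\mathbb{P}$. *)

(* Defs.v *)
(* Kronecker products use mathcomp-real-closed's [mxtens.tensmx], whose
   index convention is the standard one: (A (x) B)_{(i*p+k),(j*q+l)} = A_ij B_kl. *)
From HB Require Import structures.
From mathcomp Require Import all_boot all_order all_algebra.
From mathcomp Require Import all_classical all_reals all_analysis.
From mathcomp Require mxtens.

Set Implicit Arguments.
Unset Strict Implicit.
Unset Printing Implicit Defensive.

Import Order.TTheory GRing.Theory Num.Theory.
Import numFieldNormedType.Exports.
Local Open Scope ring_scope.
Local Open Scope classical_set_scope.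

Definition kron {R : pzRingType} {m n p q : nat}
  (A : 'M[R]_(m, n)) (B : 'M[R]_(p, q)) : 'M[R]_(m * p, n * q) :=
  mxtens.tensmx A B.

Definition kronc {R : pzRingType} {q m n : nat}
  (v : 'cV[R]_q) (B : 'M[R]_(m, n)) : 'M[R]_(q * m, n) :=
  castmx (erefl, mul1n n) (kron v B).

Definition sym {R : realType} {n : nat} (A : 'M[R]_n) : Prop := A^T = A.
Definition posdef {R : realType} {n : nat} (A : 'M[R]_n) : Prop :=
  sym A /\ forall x : 'cV[R]_n, x != 0 -> 0 < (x^T *m A *m x) 0 0.
Definition negdef {R : realType} {n : nat} (A : 'M[R]_n) : Prop := posdef (- A).
Definition possemidef {R : realType} {n : nat} (A : 'M[R]_n) : Prop :=
  sym A /\ forall x : 'cV[R]_n, 0 <= (x^T *m A *m x) 0 0.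

Definition affp {R : pzRingType} {q a b : nat} (M0 : 'M[R]_(a, b))
  (Mi : 'I_q -> 'M[R]_(a, b)) (p : 'cV[R]_q) : 'M[R]_(a, b) :=
  M0 + \sum_(i < q) p i 0 *: Mi i.

Definition hcat {R : pzRingType} {q m n : nat} (Ki : 'I_q -> 'M[R]_(m, n))
  : 'M[R]_(m, q * n) :=
  \matrix_(i, j) Ki (mxtens.mxtens_unindex j).1 i (mxtens.mxtens_unindex j).2.

Definition convex_setP {R : realType} {q : nat} (S : set 'cV[R]_q) : Prop :=
  forall x y (t : R), S x -> S y -> 0 <= t <= 1 -> S (t *: x + (1 - t) *: y).

Fixpoint cl_traj {R : realType} {nx nu np : nat}
  (A0 : 'M[R]_nx) (Ai : 'I_np -> 'M[R]_nx)
  (B0 : 'M[R]_(nx, nu)) (Bi : 'I_np -> 'M[R]_(nx, nu))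
  (K0 : 'M[R]_(nu, nx)) (Ki : 'I_np -> 'M[R]_(nu, nx))
  (ps : nat -> 'cV[R]_np) (x0 : 'cV[R]_nx) (k : nat) : 'cV[R]_nx :=
  match k with
  | 0 => x0
  | k'.+1 => (affp A0 Ai (ps k') + affp B0 Bi (ps k') *m affp K0 Ki (ps k'))
               *m cl_traj A0 Ai B0 Bi K0 Ki ps x0 k'
  end.

Definition stabilizes {R : realType} {nx nu np : nat} (PP : set 'cV[R]_np)
  (A0 : 'M[R]_nx) (Ai : 'I_np -> 'M[R]_nx)
  (B0 : 'M[R]_(nx, nu)) (Bi : 'I_np -> 'M[R]_(nx, nu))
  (K0 : 'M[R]_(nu, nx)) (Ki : 'I_np -> 'M[R]_(nu, nx)) : Prop :=
  forall ps : nat -> 'cV[R]_np, (forall k, PP (ps k)) ->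
    (forall e : R, 0 < e -> exists2 d : R, 0 < d &
       forall x0 : 'cV[R]_nx, `|x0| < d ->
         forall k, `|cl_traj A0 Ai B0 Bi K0 Ki ps x0 k| < e)
    /\ (forall x0 : 'cV[R]_nx,
          cl_traj A0 Ai B0 Bi K0 Ki ps x0 @ \oo --> (0 : 'cV[R]_nx)).

(* Data matrices, with 0-based time: the samples are indexed 0..N, N = N_d - 1. *)
Definition dataU {R : realType} {nu : nat} (N : nat) (ud : nat -> 'cV[R]_nu)
  : 'M[R]_(nu, N) := \matrix_(i, j) ud j i 0.
Definition dataUp {R : realType} {nu np : nat} (N : nat)
  (pd : nat -> 'cV[R]_np) (ud : nat -> 'cV[R]_nu) : 'M[R]_(np * nu, N) :=
  \matrix_(i, j) kronc (pd j) (ud j) i 0.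
Definition dataX {R : realType} {nx : nat} (N : nat) (xd : nat -> 'cV[R]_nx)
  : 'M[R]_(nx, N) := \matrix_(i, j) xd j i 0.
Definition dataXp {R : realType} {nx np : nat} (N : nat)
  (pd : nat -> 'cV[R]_np) (xd : nat -> 'cV[R]_nx) : 'M[R]_(np * nx, N) :=
  \matrix_(i, j) kronc (pd j) (xd j) i 0.
Definition dataXplus {R : realType} {nx : nat} (N : nat) (xd : nat -> 'cV[R]_nx)
  : 'M[R]_(nx, N) := \matrix_(i, j) xd j.+1 i 0.
Definition dataDp {R : realType} {nx nu np : nat} (N : nat)
  (ud : nat -> 'cV[R]_nu) (pd : nat -> 'cV[R]_np) (xd : nat -> 'cV[R]_nx)
  : 'M[R]_(nx + np * nx + nu + np * nu, N) :=
  col_mx (col_mx (col_mx (dataX N xd) (dataXp N pd xd)) (dataU N ud))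
         (dataUp N pd ud).

Definition MCL {R : realType} {nx nu np : nat}
  (K0 : 'M[R]_(nu, nx)) (Ki : 'I_np -> 'M[R]_(nu, nx))
  : 'M[R]_(nx + np * nx + nu + np * nu, nx + np * nx + np * (np * nx)) :=
  col_mx (col_mx (col_mx
    (row_mx (row_mx (1%:M : 'M[R]_nx) 0) 0)
    (row_mx (row_mx 0 (kron (1%:M : 'M[R]_np) (1%:M : 'M[R]_nx))) 0))
    (row_mx (row_mx K0 (hcat Ki)) 0))
    (row_mx (row_mx 0 (kron (1%:M : 'M[R]_np) K0)) (kron (1%:M : 'M[R]_np) (hcat Ki))).

(* blkdiag(P, I (x) P, I (x) I (x) P); the last block is written
   I (x) (I (x) P), which is the same matrix (associativity of (x)). *)
Definition blkP {R : realType} {nx np : nat} (P : 'M[R]_nx)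
  : 'M[R]_(nx + np * nx + np * (np * nx)) :=
  block_mx (block_mx P 0 0 (kron (1%:M : 'M[R]_np) P)) 0
           0 (kron (1%:M : 'M[R]_np) (kron (1%:M : 'M[R]_np) P)).

Definition fullblock_lmi {R : realType} {q r t u w : nat} (PP : set 'cV[R]_q)
  (Delta : 'cV[R]_q -> 'M[R]_(t, r)) (W : 'M[R]_w)
  (L11 : 'M[R]_(r, t)) (L12 : 'M[R]_(r, u))
  (L21 : 'M[R]_(w, t)) (L22 : 'M[R]_(w, u)) (Xi : 'M[R]_(r + t)) : Prop :=
  negdef ((block_mx L11 L12 (1%:M : 'M[R]_t) 0)^T *m Xi *m block_mx L11 L12 1%:M 0
          - (row_mx L21 L22)^T *m W *m row_mx L21 L22)
  /\ forall p, PP p ->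
       possemidef ((col_mx (1%:M : 'M[R]_r) (Delta p))^T *m Xi
                   *m col_mx (1%:M : 'M[R]_r) (Delta p)).

Definition DeltaP {R : realType} {nx np : nat} (p : 'cV[R]_np)
  : 'M[R]_(np * (nx + nx)) :=
  kron (diag_mx p^T) (1%:M : 'M[R]_(nx + nx)).
Definition L11m {R : realType} (nx np : nat) : 'M[R]_(np * (nx + nx)) := 0.
Definition L12m {R : realType} (nx np : nat) : 'M[R]_(np * (nx + nx), nx + nx) :=
  kronc (const_mx 1 : 'cV[R]_np) (1%:M : 'M[R]_(nx + nx)).
Definition L21m {R : realType} (nx np : nat)
  : 'M[R]_(nx + np * nx + (nx + np * nx), np * (nx + nx)) :=
  col_mx
    (col_mx (0 : 'M[R]_(nx, np * (nx + nx)))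
            (kron (1%:M : 'M[R]_np) (row_mx (1%:M : 'M[R]_nx) (0 : 'M[R]_nx))))
    (col_mx (0 : 'M[R]_(nx, np * (nx + nx)))
            (kron (1%:M : 'M[R]_np) (row_mx (0 : 'M[R]_nx) (1%:M : 'M[R]_nx)))).
Definition L22m {R : realType} (nx np : nat)
  : 'M[R]_(nx + np * nx + (nx + np * nx), nx + nx) :=
  col_mx
    (col_mx (row_mx (1%:M : 'M[R]_nx) (0 : 'M[R]_nx))
            (kronc (const_mx 1 : 'cV[R]_np) (0 : 'M[R]_(nx, nx + nx))))
    (col_mx (row_mx (0 : 'M[R]_nx) (1%:M : 'M[R]_nx))
            (kronc (const_mx 1 : 'cV[R]_np) (0 : 'M[R]_(nx, nx + nx)))).
Definition P0m {R : realType} {nx : nat} (np : nat) (P : 'M[R]_nx)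
  : 'M[R]_(nx + np * nx) := block_mx P 0 0 (0 : 'M[R]_(np * nx)).
Definition Xplusblk {R : realType} {nx N : nat} (np : nat) (Xplus : 'M[R]_(nx, N))
  : 'M[R]_(nx + np * nx, N + np * N) :=
  block_mx Xplus 0 0 (kron (1%:M : 'M[R]_np) Xplus).
Definition Wm {R : realType} {nx N : nat} (np : nat) (P : 'M[R]_nx)
  (Xplus : 'M[R]_(nx, N)) (FQ : 'M[R]_(N + np * N, nx + np * nx))
  : 'M[R]_(nx + np * nx + (nx + np * nx)) :=
  block_mx (P0m np P) (Xplusblk np Xplus *m FQ)
           (Xplusblk np Xplus *m FQ)^T (P0m np P).

(* Main.v *)
Require Import Defs.
From HB Require Import structures.
From mathcomp Require Import all_boot all_order all_algebra.
From mathcomp Require Import all_classical all_reals all_analysis.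
From mathcomp Require mxtens.
From mathcomp Require Import ring lra.
Import Order.TTheory GRing.Theory Num.Theory.
Import numFieldNormedType.Exports.
Local Open Scope ring_scope.
Local Open Scope classical_set_scope.
Section Kron.
Variable R : comPzRingType.

Lemma sum_tens (q m : nat) (F : 'I_(q * m) -> R) :
  \sum_(k < q * m) F k = \sum_(i < q) \sum_(j < m) F (mxtens.mxtens_index (i, j)).
Proof.
rewrite (reindex (@mxtens.mxtens_index q m)) /=; last first.
  by exists (@mxtens.mxtens_unindex q m) => x _;
    [exact: mxtens.mxtens_indexK | exact: mxtens.mxtens_unindexK].
by rewrite pair_big /=; apply: eq_bigr => -[i j].
Qed.

Lemma kroncE q m n (v : 'cV[R]_q) (C : 'M[R]_(m, n)) i j k :
  kronc v C (mxtens.mxtens_index (i, j)) k = v i 0 * C j k.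
Proof.
rewrite /kronc castmxE /= /kron !mxE.
set a := cast_ord _ _; set b := cast_ord _ _.
have -> : a = mxtens.mxtens_index (i, j) by apply: val_inj.
rewrite mxtens.mxtens_indexK /=.
congr (v i _ * C j _); apply: val_inj => /=; rewrite ?modn_small //.
by rewrite divn_small.
Qed.

Lemma kronE q q' m m' (A : 'M[R]_(q, q')) (B : 'M[R]_(m, m')) i j k l :
  kron A B (mxtens.mxtens_index (i, j)) (mxtens.mxtens_index (k, l)) = A i k * B j l.
Proof. exact: mxtens.tensmxE. Qed.

Lemma hcatE q m n (M : 'I_q -> 'M[R]_(m, n)) a i j :
  hcat M a (mxtens.mxtens_index (i, j)) = M i a j.
Proof. by rewrite /hcat mxE mxtens.mxtens_indexK. Qed.

Lemma kroncP q m n (A B : 'M[R]_(q * m, n)) :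
  (forall i j k, A (mxtens.mxtens_index (i, j)) k = B (mxtens.mxtens_index (i, j)) k) -> A = B.
Proof.
move=> H; apply/matrixP => r k; case: (mxtens.mxtens_indexP r) => i j; exact: H.
Qed.

Lemma kronc_mulmx q m n p (v : 'cV[R]_q) (C : 'M[R]_(m, n)) (D : 'M[R]_(n, p)) :
  kronc v C *m D = kronc v (C *m D).
Proof.
apply: kroncP => i j k; rewrite kroncE [LHS]mxE [in RHS]mxE big_distrr /=.
by apply: eq_bigr => l _; rewrite kroncE mulrA.
Qed.

Lemma kron_mul_kronc q q' m m' n (A : 'M[R]_(q', q)) (B : 'M[R]_(m', m))
  (v : 'cV[R]_q) (C : 'M[R]_(m, n)) :
  kron A B *m kronc v C = kronc (A *m v) (B *m C).
Proof.
apply: kroncP => i j k; rewrite kroncE [LHS]mxE sum_tens [in RHS]mxE [in RHS]mxE.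
rewrite big_distrl /=; apply: eq_bigr => a _.
rewrite big_distrr /=; apply: eq_bigr => b _.
rewrite kronE kroncE; ring.
Qed.

Lemma hcat_mul_kronc q m n p (M : 'I_q -> 'M[R]_(m, n)) (v : 'cV[R]_q) (C : 'M[R]_(n, p)) :
  hcat M *m kronc v C = \sum_(i < q) v i 0 *: (M i *m C).
Proof.
apply/matrixP => a b; rewrite !mxE summxE sum_tens; apply: eq_bigr => i _.
rewrite !mxE big_distrr /=; apply: eq_bigr => j _.
rewrite hcatE kroncE; ring.
Qed.

Lemma kroncD q m n (v : 'cV[R]_q) (C D : 'M[R]_(m, n)) :
  kronc v (C + D) = kronc v C + kronc v D.
Proof. by apply: kroncP => i j k; rewrite !mxE !kroncE !mxE mulrDr. Qed.

Lemma kronc0 q m n (v : 'cV[R]_q) : kronc v (0 : 'M[R]_(m, n)) = 0.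
Proof. by apply: kroncP => i j k; rewrite kroncE !mxE mulr0. Qed.

Lemma kronc_sum q m n I (r : seq I) (v : 'cV[R]_q) (F : I -> 'M[R]_(m, n)) :
  kronc v (\sum_(i <- r) F i) = \sum_(i <- r) kronc v (F i).
Proof.
elim: r => [|a r IH]; first by rewrite !big_nil kronc0.
by rewrite !big_cons kroncD IH.
Qed.

Lemma kroncZ q m n (v : 'cV[R]_q) c (C : 'M[R]_(m, n)) :
  kronc v (c *: C) = c *: kronc v C.
Proof. by apply: kroncP => i j k; rewrite !mxE !kroncE !mxE; ring. Qed.

End Kron.
Section Alg.
Variable R : realType.
Variables (nx nu np N : nat).
Variables (A0 : 'M[R]_nx) (Ai : 'I_np -> 'M[R]_nx)
  (B0 : 'M[R]_(nx, nu)) (Bi : 'I_np -> 'M[R]_(nx, nu))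
  (K0 : 'M[R]_(nu, nx)) (Ki : 'I_np -> 'M[R]_(nu, nx)) (P : 'M[R]_nx).

Definition Zm (p : 'cV[R]_np) : 'M[R]_(nx + np * nx + np * (np * nx), nx) :=
  col_mx (col_mx 1%:M (kronc p 1%:M)) (kronc p (kronc p (1%:M : 'M[R]_nx))).
Definition Theta := row_mx (row_mx (row_mx A0 (hcat Ai)) B0) (hcat Bi).
Definition Acl (p : 'cV[R]_np) := affp A0 Ai p + affp B0 Bi p *m affp K0 Ki p.

Lemma kron1_kronc q m n (v : 'cV[R]_q) (C : 'M[R]_(m, n)) (B : 'M[R]_m) :
  kron (1%:M : 'M[R]_q) B *m kronc v C = kronc v (B *m C).
Proof. by rewrite kron_mul_kronc mul1mx. Qed.
Arguments kron1_kronc : clear implicits.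

Lemma blkP_Z p : blkP P *m Zm p = Zm p *m P.
Proof.
rewrite /blkP /Zm !mul_block_col !mul_col_mx !mul0mx !addr0 !add0r.
by rewrite !kron_mul_kronc !kronc_mulmx !mul1mx !mulmx1.
Qed.

Lemma hcat1 p m (M : 'I_np -> 'M[R]_(m, nx)) :
  hcat M *m kronc p (1%:M : 'M[R]_nx) = \sum_(i < np) p i 0 *: M i.
Proof. by rewrite hcat_mul_kronc; apply: eq_bigr => i _; rewrite mulmx1. Qed.

Lemma MCL_Z p : MCL K0 Ki *m Zm p =
  col_mx (col_mx (col_mx 1%:M (kronc p 1%:M)) (affp K0 Ki p)) (kronc p (affp K0 Ki p)).
Proof.
rewrite /MCL /Zm !mul_col_mx !mul_row_col !mul0mx !addr0 !add0r mulmx1.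
by rewrite !kron_mul_kronc !mul1mx !hcat1 /affp !mulmx1 kroncD.
Qed.

Lemma Theta_col m (X : 'M[R]_(nx, m)) Xp U Up :
  Theta *m col_mx (col_mx (col_mx X Xp) U) Up =
  A0 *m X + hcat Ai *m Xp + B0 *m U + hcat Bi *m Up.
Proof. by rewrite /Theta !mul_row_col. Qed.

Lemma Theta_MCL_Z p : Theta *m (MCL K0 Ki *m Zm p) = Acl p.
Proof.
rewrite MCL_Z Theta_col mulmx1 hcat1 hcat_mul_kronc /Acl /affp mulmxDl mulmx_suml.
rewrite -!addrA; congr (_ + _); congr (_ + _); congr (_ + _).
by apply: eq_bigr => i _; rewrite scalemxAl.
Qed.

Lemma col_ext m n (A B : 'M[R]_(m, n)) : (forall j, col j A = col j B) -> A = B.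
Proof.
move=> H; apply/matrixP => i j; have := congr1 (fun M : 'cV[R]_m => M i 0) (H j).
by rewrite !mxE.
Qed.

Lemma col_mulmx m n p j (A : 'M[R]_(m, n)) (B : 'M[R]_(n, p)) :
  col j (A *m B) = A *m col j B.
Proof. by rewrite !colE mulmxA. Qed.

Lemma col_data m (g : nat -> 'cV[R]_m) (j : 'I_N) :
  col j (\matrix_(i, j) g j i 0 : 'M[R]_(m, N)) = g j.
Proof. by apply/matrixP => a b; rewrite !mxE [b]ord1. Qed.

Lemma data_eq (ud : nat -> 'cV[R]_nu) (pd : nat -> 'cV[R]_np) (xd : nat -> 'cV[R]_nx) :
  (forall k, (k < N)%N ->
     xd k.+1 = affp A0 Ai (pd k) *m xd k + affp B0 Bi (pd k) *m ud k) ->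
  dataXplus N xd = Theta *m dataDp N ud pd xd.
Proof.
move=> H; apply: col_ext => j; rewrite col_mulmx /dataDp !col_col_mx.
rewrite /dataXplus /dataX /dataXp /dataU /dataUp.
rewrite !(col_data _ (fun j => xd j.+1)) !(col_data _ xd) !(col_data _ ud).
rewrite !(col_data _ (fun j => kronc (pd j) (xd j))) !(col_data _ (fun j => kronc (pd j) (ud j))).
rewrite Theta_col !hcat_mul_kronc H // /affp !mulmxDl !mulmx_suml.
rewrite !addrA; congr (_ + _ + _ + _); apply: eq_bigr => i _; first [by rewrite scalemxAl | by rewrite -scalemxAl].
Qed.

End Alg.
Section LMI.
Variable R : realType.
Variables (nx np N : nat).

Definition Em (p : 'cV[R]_np) : 'M[R]_(nx + np * nx, nx) :=
  col_mx 1%:M (kronc p 1%:M).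
Definition ENm (p : 'cV[R]_np) : 'M[R]_(N + np * N, N) :=
  col_mx 1%:M (kronc p 1%:M).

Lemma trmx_kron q q' m m' (A : 'M[R]_(q, q')) (B : 'M[R]_(m, m')) :
  (kron A B)^T = kron A^T B^T.
Proof. exact: mxtens.trmx_tens. Qed.

Lemma Xp_EN p (X : 'M[R]_(nx, N)) :
  X *m (ENm p)^T = (Em p)^T *m Xplusblk np X.
Proof.
rewrite /ENm /Em /Xplusblk !tr_col_mx mul_mx_row mul_row_block !mulmx0 !addr0 add0r.
rewrite !trmx1 mulmx1 mul1mx; congr row_mx.
apply: trmx_inj; rewrite !trmx_mul !trmxK trmx_kron trmx1 kron_mul_kronc.
rewrite mul1mx mulmx1. by rewrite (@kronc_mulmx _ _ _ _ _ p) mul1mx.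
Qed.

Lemma diag_const (p : 'cV[R]_np) : diag_mx p^T *m const_mx 1 = p.
Proof. by apply/matrixP => i j; rewrite mul_diag_mx !mxE [j]ord1 mulr1. Qed.

Lemma DL12 p (v : 'cV[R]_(nx + nx)) : DeltaP p *m (@L12m R nx np *m v) = kronc p v.
Proof.
by rewrite /L12m kronc_mulmx mul1mx /DeltaP kron_mul_kronc diag_const mul1mx.
Qed.

Lemma S_z p (v1 v2 : 'cV[R]_nx) :
  let v := col_mx v1 v2 in
  row_mx (@L21m R nx np) (@L22m R nx np) *m col_mx (DeltaP p *m (@L12m R nx np *m v)) v
  = col_mx (Em p *m v1) (Em p *m v2).
Proof.
move=> v; rewrite mul_row_col DL12 /L21m /L22m /Em /v !mul_col_mx !kron_mul_kronc.
rewrite !kronc0 !mul0mx !mul_row_col !mul1mx !mul0mx !addr0 !add0r !add_col_mx.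
by rewrite !addr0 !add0r !kronc_mulmx !mul1mx.
Qed.

Lemma T_z p (v : 'cV[R]_(nx + nx)) :
  block_mx (@L11m R nx np) (@L12m R nx np) 1%:M 0 *m
    col_mx (DeltaP p *m (@L12m R nx np *m v)) v
  = col_mx 1%:M (DeltaP p) *m (@L12m R nx np *m v).
Proof.
rewrite mul_block_col /L11m. rewrite (mul0mx _ v) mul0mx add0r addr0 mul1mx mul_col_mx mul1mx.
done.
Qed.

Lemma EP0E p (P : 'M[R]_nx) : (Em p)^T *m P0m np P *m Em p = P.
Proof.
rewrite /Em /P0m tr_col_mx mul_row_block !mulmx0 !addr0 trmx1 mul1mx.
by rewrite mul_row_col mulmx1 mul0mx addr0.
Qed.

Lemma Wquad p (P : 'M[R]_nx) (X : 'M[R]_(nx, N)) (FQ : 'M[R]_(N + np * N, nx + np * nx))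
  (v1 v2 : 'cV[R]_nx) :
  let M := (Em p)^T *m (Xplusblk np X *m FQ) *m Em p in
  (col_mx (Em p *m v1) (Em p *m v2))^T *m @Wm R nx N np P X FQ *m col_mx (Em p *m v1) (Em p *m v2)
  = v1^T *m P *m v1 + v1^T *m M *m v2 + v2^T *m M^T *m v1 + v2^T *m P *m v2.
Proof.
move=> M; rewrite /Wm tr_col_mx mul_row_block mul_row_col !mulmxDl.
set G := Xplusblk np X *m FQ.
have e1 : (Em p *m v1)^T *m P0m np P *m (Em p *m v1) = v1^T *m P *m v1.
  by rewrite trmx_mul -[in RHS](EP0E p P) !mulmxA.
have e2 : (Em p *m v2)^T *m P0m np P *m (Em p *m v2) = v2^T *m P *m v2.
  by rewrite trmx_mul -[in RHS](EP0E p P) !mulmxA.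
have e3 : (Em p *m v1)^T *m G *m (Em p *m v2) = v1^T *m M *m v2.
  by rewrite /M trmx_mul !mulmxA.
have e4 : (Em p *m v2)^T *m G^T *m (Em p *m v1) = v2^T *m M^T *m v1.
  by rewrite /M !trmx_mul !trmxK !mulmxA.
rewrite e1 e2 e3 e4; rewrite -!addrA; congr (_ + _); rewrite addrCA; congr (_ + _).

Qed.

End LMI.
Section Quad.
Variable R : realType.

Definition sq {n} (x : 'cV[R]_n) : R := (x^T *m x) 0 0.
Definition qf {n} (M : 'M[R]_n) (x : 'cV[R]_n) : R := (x^T *m M *m x) 0 0.

Lemma sqE n (x : 'cV[R]_n) : sq x = \sum_i x i 0 ^+ 2.
Proof. by rewrite /sq !mxE; apply: eq_bigr => i _; rewrite !mxE expr2. Qed.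

Lemma sq_ge0 n (x : 'cV[R]_n) : 0 <= sq x.
Proof. by rewrite sqE; apply: sumr_ge0 => i _; exact: sqr_ge0. Qed.

Lemma entry_le_sq n (x : 'cV[R]_n) i : x i 0 ^+ 2 <= sq x.
Proof.
rewrite sqE (bigD1 i) //= lerDl; apply: sumr_ge0 => ? _; exact: sqr_ge0.
Qed.

Lemma qfE n (M : 'M[R]_n) x : qf M x = \sum_j \sum_i x i 0 * M i j * x j 0.
Proof.
rewrite /qf mxE; apply: eq_bigr => j _; rewrite mxE big_distrl /=.
by apply: eq_bigr => i _; rewrite !mxE.
Qed.

Lemma entry_le_norm m n (A : 'M[R]_(m, n)) i j : `|A i j| <= `|A|.
Proof.
rewrite [leRHS]/Num.norm /= mx_normrE; apply/bigmax_geP; right => /=.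
by exists (i, j).
Qed.

Lemma norm_le_sqrt n (x : 'cV[R]_n) : `|x| <= Num.sqrt (sq x).
Proof.
rewrite [leLHS]/Num.norm /= mx_normrE; apply: bigmax_le => [|[i j] _] /=.
  exact: sqrtr_ge0.
rewrite [j]ord1 -(sqrtr_sqr (x i 0)) ler_sqrt ?sq_ge0 //.
exact: entry_le_sq.
Qed.

Lemma norm_sq_le n (x : 'cV[R]_n) : `|x| ^+ 2 <= sq x.
Proof.
rewrite -(sqr_sqrtr (sq_ge0 _ x)); rewrite lerXn2r ?nnegrE ?sqrtr_ge0 //.
exact: norm_le_sqrt.
Qed.

Lemma sq_le_norm n (x : 'cV[R]_n) : sq x <= n%:R * `|x^T| ^+ 2.
Proof.
rewrite sqE; apply: (@le_trans _ _ (\sum_(i < n) `|x^T| ^+ 2)).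
  apply: ler_sum => i _.
  have h := entry_le_norm _ _ (x^T) 0 i; rewrite mxE in h.
  rewrite -real_normK ?num_real // lerXn2r ?nnegrE //.
by rewrite sumr_const card_ord mulr_natl.
Qed.

Lemma qf_ub n (M : 'M[R]_n) : exists2 L, 0 <= L & forall x, qf M x <= L * sq x.
Proof.
exists (\sum_i \sum_j `|M i j|).
  by apply: sumr_ge0 => i _; apply: sumr_ge0 => j _.
move=> x; rewrite qfE exchange_big big_distrl /=; apply: ler_sum => i _.
rewrite big_distrl /=; apply: ler_sum => j _.
have hi := entry_le_sq _ x i; have hj := entry_le_sq _ x j.
have ai := normr_ge0 (x i 0); have aj := normr_ge0 (x j 0).
have am := normr_ge0 (M i j).
rewrite -(real_normK (num_real (x i 0))) in hi.
rewrite -(real_normK (num_real (x j 0))) in hj.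
apply: le_trans (ler_norm _) _; rewrite !normrM.
have : `|x i 0| * `|x j 0| <= sq x by nra.
move=> h; have := ler_wpM2l am h.
have -> : `|x i 0| * `|M i j| * `|x j 0| = `|M i j| * (`|x i 0| * `|x j 0|) by ring.
by [].
Qed.

End Quad.
Arguments sq {R n}.
Arguments qf {R n}.
Arguments sq_ge0 {R n}.
Arguments entry_le_sq {R n}.
Arguments sq_le_norm {R n}.
Arguments norm_sq_le {R n}.
Arguments qf_ub {R n}.
Arguments qfE {R n}.
Arguments sqE {R n}.
Arguments entry_le_norm {R m n}.
Section Unif.
Variable R : realType.

Lemma cont_sum (T : topologicalType) I (r : seq I) (g : I -> T -> R) :
  (forall i, continuous (g i)) -> continuous (fun t => \sum_(i <- r) g i t).
Proof.
move=> H; elim: r => [|a r IH].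
  have -> : (fun t => \sum_(i <- [::]) g i t) = fun=> 0.
    by apply: funext => t; rewrite big_nil.
  exact: cst_continuous.
have -> : (fun t => \sum_(i <- a :: r) g i t) = g a + (fun t => \sum_(i <- r) g i t).
  by apply: funext => t; rewrite big_cons.
by move=> t; apply: continuousD; [exact: H | exact: IH].
Qed.

Lemma unif n (M : 'M[R]_n) : posdef M ->
  exists2 c, 0 < c & forall x, c * sq x <= qf M x.
Proof.
case: n M => [|n] M [Msym Mpos].
  by exists 1 => // x; rewrite /sq /qf !mxE !big_ord0 mulr0.
pose f (v : 'rV[R]_n.+1) := \sum_j \sum_i v 0 i * M i j * v 0 j.
pose S := [set v : 'rV[R]_n.+1 | `|v| = 1].
have fqf x : f x^T = qf M x.
  rewrite qfE /f; apply: eq_bigr => j _; apply: eq_bigr => i _; by rewrite !mxE.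
have fZ a v : f (a *: v) = a ^+ 2 * f v.
  rewrite /f big_distrr; apply: eq_bigr => j _ /=; rewrite big_distrr.
  apply: eq_bigr => i _ /=; rewrite !mxE; ring.
pose v1 : 'rV[R]_n.+1 := const_mx 1.
have v1nz : v1 != 0.
  by apply/eqP => /matrixP /(_ 0 0); rewrite !mxE => /eqP; rewrite oner_eq0.
have Sne : S !=set0.
  exists (`|v1|^-1 *: v1); rewrite /S /= normrZV // unitfE normr_eq0 //.
have Scl : closed S.
  have := @preimage_closed _ _ (@Num.norm _ 'rV[R]_n.+1) [set x | x = 1].
  apply.
    by move=> x _; exact: norm_continuous.
  exact: closed_eq.
have Sbd : bounded_set S.
  exists 1; split; first exact: num_real.
  by move=> y y1 v Sv /=; rewrite Sv ltW.
have Sc : compact S := bounded_closed_compact Sbd Scl.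
have fc : continuous f.
  apply: cont_sum => j; apply: cont_sum => i; move=> v.
  apply: (@continuousM _ _ (fun v : 'rV[R]_n.+1 => v 0 i * M i j) (fun v => v 0 j)).
    apply: (@continuousM _ _ (fun v : 'rV[R]_n.+1 => v 0 i) (fun v => M i j)).
      exact: coord_continuous.
    exact: cst_continuous.
  exact: coord_continuous.
have [v0 Sv0 minf] := compact_EVT_min Sne Sc (continuous_subspaceT fc).
have v0nz : v0^T != 0.
  rewrite inE in Sv0; apply/eqP => h.
  have e : v0 = 0 by rewrite -(trmxK v0) h trmx0.
  by move: Sv0; rewrite /S /= e normr0 => /eqP; rewrite eq_sym oner_eq0.
have c0pos : 0 < f v0 by rewrite -[v0]trmxK fqf; apply: Mpos.
exists (f v0 / n.+1%:R); first by rewrite divr_gt0.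
move=> x; have [->|xnz] := eqVneq x 0.
  by rewrite /sq /qf trmx0 !mul0mx !mxE mulr0.
set a := `|x^T|.
have xTnz : x^T != 0 by apply: contra xnz => /eqP h; rewrite -(trmxK x) h trmx0.
have a0 : 0 < a by rewrite normr_gt0.
have St : S (a^-1 *: x^T) by rewrite /S /= normrZV // unitfE gt_eqF.
have := minf _ (mem_set St); rewrite fZ fqf => h.
have h1 : f v0 * a ^+ 2 <= qf M x.
  have := ler_wpM2r (sqr_ge0 a) h.
  by rewrite mulrAC -exprMn mulVf ?gt_eqF // expr1n mul1r.
have h2 := sq_le_norm x.
apply: le_trans h1.
have hN : 0 < n.+1%:R :> R by rewrite ltr0Sn.
have := ler_wpM2l (ltW (divr_gt0 c0pos hN)) h2.
move/le_trans; apply.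
by rewrite mulrA divfK ?gt_eqF.
Qed.

End Unif.
Arguments unif {R n M}.
Section Stab.
Variable R : realType.

Lemma sq_le_normc n (x : 'cV[R]_n) : sq x <= n%:R * `|x| ^+ 2.
Proof.
rewrite sqE; apply: (@le_trans _ _ (\sum_(i < n) `|x| ^+ 2)).
  apply: ler_sum => i _.
  have h := entry_le_norm x i 0.
  rewrite -real_normK ?num_real // lerXn2r ?nnegrE //.
by rewrite sumr_const card_ord mulr_natl.
Qed.

Lemma qf_ge0 n (P : 'M[R]_n) : posdef P -> forall x, 0 <= qf P x.
Proof.
move=> [_ Pp] x; have [->|xnz] := eqVneq x 0.
  by rewrite /qf trmx0 !mul0mx mxE.
exact/ltW/Pp.
Qed.

Lemma posdef_unit n (P : 'M[R]_n) : posdef P -> P \in unitmx.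
Proof.
move=> [_ Pp]; rewrite unitmxE unitfE; apply/negP => /det0P [v vnz vP].
have vTnz : v^T != 0 by apply: contra vnz => /eqP h; rewrite -(trmxK v) h trmx0.
have := Pp _ vTnz; rewrite trmxK vP mul0mx mxE ltxx //.
Qed.

Lemma mxD00 m n (A B : 'M[R]_(m, n)) i j : (A + B) i j = A i j + B i j.
Proof. by rewrite mxE. Qed.

Lemma mxN00 m n (A : 'M[R]_(m, n)) i j : (- A) i j = - A i j.
Proof. by rewrite mxE. Qed.

Lemma expr_id n (P M : 'M[R]_n) (a b : 'cV[R]_n) : P^T = P -> M *m b = P *m a ->
  ((-a)^T *m P *m (-a) + (-a)^T *m M *m b + b^T *m M^T *m (-a) + b^T *m P *m b) 0 0
  = qf P b - qf P a.
Proof.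
move=> Ps Mb.
have tN : (-a)^T = - a^T by apply/matrixP => i j; rewrite !mxE.
have e2 : ((-a)^T *m M *m b) 0 0 = - qf P a.
  by rewrite tN (mulNmx a^T M) (mulNmx (a^T *m M) b) -mulmxA Mb mulmxA mxN00.
have e3 : (b^T *m M^T *m (-a)) 0 0 = - qf P a.
  rewrite -e2; have -> : b^T *m M^T *m (-a) = ((-a)^T *m M *m b)^T.
    by rewrite !trmx_mul trmxK mulmxA.
  by rewrite mxE.
rewrite !mxD00 e2 e3.
have -> : (-a)^T *m P *m (-a) = a^T *m P *m a.
  by rewrite tN (mulNmx a^T P) (mulNmx (a^T *m P) (-a)) (mulmxN (a^T *m P) a) opprK.
rewrite /qf; lra.
Qed.

End Stab.
Arguments posdef_unit {R n P}.
Arguments qf_ge0 {R n P}.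
Arguments sq_le_normc {R n}.
Arguments expr_id {R n P M a b}.
Section Stab2.
Variable R : realType.

Fixpoint trj {n} (A : nat -> 'M[R]_n) (x0 : 'cV[R]_n) k : 'cV[R]_n :=
  match k with 0 => x0 | k'.+1 => A k' *m trj A x0 k' end.

Lemma stab n (P : 'M[R]_n) c (A : nat -> 'M[R]_n) : posdef P -> 0 < c ->
  (forall k v1 v2, c * sq v2 <= (v1^T *m P *m v1 + v1^T *m (A k *m P) *m v2
      + v2^T *m (A k *m P)^T *m v1 + v2^T *m P *m v2) 0 0) ->
  exists K, exists rho, [/\ 0 <= K, 0 <= rho, rho < 1 &
    forall x0 k, `|trj A x0 k| ^+ 2 <= K * rho ^+ k * `|x0| ^+ 2].
Proof.
move=> Pd c0 H.
have Pu := posdef_unit Pd; have Ps : P^T = P := Pd.1.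
have [cP cP0 HP] := unif Pd.
have [L0 L00 HL0] := qf_ub P.
have [L2 L20 HL2] := qf_ub (P^T *m P).
have [L3 L30 HL3] := qf_ub ((invmx P)^T *m invmx P).
pose L := L0 + c.
have L0' : 0 < L by rewrite /L; lra.
pose t := c / L.
have t0 : 0 < t by rewrite divr_gt0.
have tL : t * L = c by rewrite /t divfK // gt_eqF.
pose rho := 1 - t.
have rho0 : 0 <= rho.
  rewrite /rho subr_ge0 /t ler_pdivrMr // mul1r /L; lra.
exists (L2 / cP * L0 * L3 * n%:R), rho; split => //.
- by rewrite !mulr_ge0 // ?invr_ge0 ltW.
- rewrite /rho; lra.
move=> x0.
pose xi k := invmx P *m trj A x0 k.
pose V k := qf P (xi k).
have Pxi k : P *m xi k = trj A x0 k by rewrite /xi mulmxA mulmxV // mul1mx.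
have Vge0 k : 0 <= V k by exact: qf_ge0.
have step k : V k.+1 <= rho * V k.
  have Mb : A k *m P *m xi k = P *m xi k.+1 by rewrite -mulmxA !Pxi.
  have e := H k (- xi k.+1) (xi k).
  rewrite (expr_id Ps Mb) in e.
  have hv := HL0 (xi k).
  have sq0 := sq_ge0 (xi k).
  have h1 : t * V k <= c * sq (xi k).
    rewrite -tL -mulrA; apply: ler_wpM2l; first exact: ltW.
    rewrite /L mulrDl; have := mulr_ge0 (ltW c0) sq0; rewrite /V; lra.
  rewrite /rho /V; move: e h1; rewrite /V; lra.
have Vk k : V k <= rho ^+ k * V 0.
  elim: k => [|k IH]; first by rewrite expr0 mul1r.
  apply: le_trans (step k) _; rewrite exprS -mulrA; exact: ler_wpM2l.
move=> k.
have a1 : `|trj A x0 k| ^+ 2 <= L2 * sq (xi k).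
  apply: le_trans (norm_sq_le _) _; rewrite -Pxi.
  have -> : sq (P *m xi k) = qf (P^T *m P) (xi k) by rewrite /sq /qf trmx_mul !mulmxA.
  exact: HL2.
have b1 : sq (xi k) <= cP^-1 * V k.
  by rewrite mulrC ler_pdivlMr // mulrC; exact: HP.
have a4 : V 0 <= L0 * sq (xi 0) := HL0 _.
have a5 : sq (xi 0) <= L3 * sq x0.
  have -> : sq (xi 0) = qf ((invmx P)^T *m invmx P) x0.
    by rewrite /sq /qf /xi /= trmx_mul !mulmxA.
  exact: HL3.
have a6 := sq_le_normc x0.
have c1 : V 0 <= L0 * (L3 * (n%:R * `|x0| ^+ 2)).
  apply: le_trans a4 _; apply: ler_wpM2l => //; apply: le_trans a5 _.
  exact: ler_wpM2l.
have c2 : V k <= rho ^+ k * (L0 * (L3 * (n%:R * `|x0| ^+ 2)))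
  by apply: le_trans (Vk k) _; apply: ler_wpM2l => //; exact: exprn_ge0.
have c3 : sq (xi k) <= cP^-1 * (rho ^+ k * (L0 * (L3 * (n%:R * `|x0| ^+ 2)))).
  apply: le_trans b1 _; apply: ler_wpM2l => //; rewrite invr_ge0; exact: ltW.
apply: le_trans a1 _.
have := ler_wpM2l L20 c3; move/le_trans; apply.
rewrite le_eqVlt; apply/orP; left; apply/eqP; rewrite /t; ring.
Qed.

End Stab2.
Section Concl.
Variable R : realType.

Lemma concl n (T : 'cV[R]_n -> nat -> 'cV[R]_n) K rho :
  0 <= K -> 0 <= rho -> rho < 1 ->
  (forall x0 k, `|T x0 k| ^+ 2 <= K * rho ^+ k * `|x0| ^+ 2) ->
  (forall e : R, 0 < e -> exists2 d : R, 0 < d &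
       forall x0 : 'cV[R]_n, `|x0| < d -> forall k, `|T x0 k| < e)
  /\ (forall x0 : 'cV[R]_n, T x0 @ \oo --> (0 : 'cV[R]_n)).
Proof.
move=> K0 rho0 rho1 H; split.
  move=> e e0; exists (e / (K + 1)); first by rewrite divr_gt0 // ltr_wpDl.
  move=> x0 hx k.
  have hK1 : 0 < K + 1 by rewrite ltr_wpDl.
  set d := e / (K + 1) in hx.
  have dK : d * (K + 1) = e by rewrite /d divfK // gt_eqF.
  have nx0 := normr_ge0 x0.
  have d0 : 0 < d by rewrite /d divr_gt0.
  have rk : rho ^+ k <= 1 by rewrite exprn_ile1 // ltW.
  have rk0 : 0 <= rho ^+ k by rewrite exprn_ge0.
  have h := H x0 k.
  have h2 : K * rho ^+ k * `|x0| ^+ 2 <= K * `|x0| ^+ 2.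
    rewrite -mulrA; apply: ler_wpM2l => //; rewrite -[leRHS]mul1r.
    apply: ler_wpM2r => //; exact: sqr_ge0.
  have h3 : `|x0| ^+ 2 <= d ^+ 2.
    by rewrite lerXn2r ?nnegrE //; apply: ltW.
  have h4 : K * `|x0| ^+ 2 <= K * d ^+ 2 by apply: ler_wpM2l.
  have h5 : K * d ^+ 2 < e ^+ 2.
    rewrite -dK; nra.
  have nT := normr_ge0 (T x0 k).
  rewrite ltNge; apply/negP => he.
  have : e ^+ 2 <= `|T x0 k| ^+ 2 by rewrite lerXn2r ?nnegrE ?(ltW e0).
  lra.
move=> x0; apply: (proj2 (cvgrPdist_lt _ _)) => eps eps0.
have rho1' : `|rho| < 1 by rewrite ger0_norm.
have hr := cvg_expr rho1'.
set B := K * `|x0| ^+ 2 + 1.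
have B0 : 0 < B by rewrite /B ltr_wpDl // mulr_ge0 // sqr_ge0.
have de0 : 0 < eps ^+ 2 / B by rewrite divr_gt0 // exprn_gt0.
have hk0 : \forall k \near \oo, `|0 - rho ^+ k| < eps ^+ 2 / B.
  by move: hr => /cvgrPdist_lt; apply.
apply: filterS hk0 => k hk.
rewrite sub0r normrN in hk *.
have rk0 : 0 <= rho ^+ k by rewrite exprn_ge0.
rewrite ger0_norm // in hk.
have h := H x0 k.
have KB : 0 <= K * `|x0| ^+ 2 by rewrite mulr_ge0 // sqr_ge0.
have h2 : K * `|x0| ^+ 2 * rho ^+ k <= K * `|x0| ^+ 2 * (eps ^+ 2 / B).
  by apply: ler_wpM2l => //; exact: ltW.
have h3 : K * `|x0| ^+ 2 * (eps ^+ 2 / B) < eps ^+ 2.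
  rewrite mulrA ltr_pdivrMr // ; rewrite /B.
  have := exprn_gt0 2 eps0; nra.
have nT := normr_ge0 (T x0 k).
rewrite ltNge; apply/negP => he.
rewrite sub0r normrN in he.
have : eps ^+ 2 <= `|T x0 k| ^+ 2 by rewrite lerXn2r ?nnegrE ?(ltW eps0).
have : K * rho ^+ k * `|x0| ^+ 2 = K * `|x0| ^+ 2 * rho ^+ k by ring.
lra.
Qed.

End Concl.
Arguments concl {R n T K rho}.
Lemma qf_sub (R : realType) n (A B : 'M[R]_n) x : qf (A - B) x = qf A x - qf B x.
Proof. by rewrite /qf mulmxBr mulmxBl mxE mxN00. Qed.

Lemma qf_opp (R : realType) n (A : 'M[R]_n) x : qf (- A) x = - qf A x.
Proof. by rewrite /qf (mulmxN x^T A) (mulNmx (x^T *m A) x) mxN00. Qed.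

Lemma qf_congr (R : realType) m n (X : 'M[R]_(m, n)) (Y : 'M[R]_m) (z : 'cV[R]_n) :
  qf (X^T *m Y *m X) z = ((X *m z)^T *m Y *m (X *m z)) 0 0.
Proof. by rewrite /qf trmx_mul !mulmxA. Qed.

Lemma sq_col (R : realType) m n (a : 'cV[R]_m) (b : 'cV[R]_n) :
  sq (col_mx a b) = sq a + sq b.
Proof. by rewrite /sq tr_col_mx mul_row_col mxD00. Qed.

Lemma cl_trajE (R : realType) nx nu np (A0 : 'M[R]_nx) Ai (B0 : 'M[R]_(nx, nu)) Bi
  (K0 : 'M[R]_(nu, nx)) Ki (ps : nat -> 'cV[R]_np) x0 k :
  cl_traj A0 Ai B0 Bi K0 Ki ps x0 k =
  trj R (fun k => Acl R nx nu np A0 Ai B0 Bi K0 Ki (ps k)) x0 k.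
Proof. by elim: k => [|k IH] //=; rewrite IH. Qed.

Theorem theorem2 (R : realType) (nx nu np N : nat)
  (PP : set 'cV[R]_np) (PP_compact : compact PP) (PP_convex : convex_setP PP)
  (A0 : 'M[R]_nx) (Ai : 'I_np -> 'M[R]_nx)
  (B0 : 'M[R]_(nx, nu)) (Bi : 'I_np -> 'M[R]_(nx, nu))
  (ud : nat -> 'cV[R]_nu) (pd : nat -> 'cV[R]_np) (xd : nat -> 'cV[R]_nx)
  (Hdata : forall k, (k < N)%N ->
     PP (pd k) /\ xd k.+1 = affp A0 Ai (pd k) *m xd k + affp B0 Bi (pd k) *m ud k)
  (Hrank : row_free (dataDp N ud pd xd))
  (K0 : 'M[R]_(nu, nx)) (Ki : 'I_np -> 'M[R]_(nu, nx))
  (P : 'M[R]_nx)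
  (F : 'M[R]_(N, nx + np * nx + np * (np * nx)))
  (FQ : 'M[R]_(N + np * N, nx + np * nx))
  (Xi : 'M[R]_(np * (nx + nx) + np * (nx + nx))) :
  posdef P ->
  (forall p : 'cV[R]_np, PP p ->
     F *m col_mx (col_mx (1%:M : 'M[R]_nx) (kronc p (1%:M : 'M[R]_nx)))
                 (kronc p (kronc p (1%:M : 'M[R]_nx)))
     = (col_mx (1%:M : 'M[R]_N) (kronc p (1%:M : 'M[R]_N)))^T *m FQ
         *m col_mx (1%:M : 'M[R]_nx) (kronc p (1%:M : 'M[R]_nx))) ->
  sym Xi ->
  MCL K0 Ki *m blkP P = dataDp N ud pd xd *m F ->
  fullblock_lmi PP (@DeltaP R nx np) (@Wm R nx N np P (dataXplus N xd) FQ)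
    (@L11m R nx np) (@L12m R nx np) (@L21m R nx np) (@L22m R nx np) Xi ->
  stabilizes PP A0 Ai B0 Bi K0 Ki.
Proof.
move=> Pd HF _ HM [Hneg Hpsd].
set Xp := dataXplus N xd.
have Hd : Xp = Theta R nx nu np A0 Ai B0 Bi *m dataDp N ud pd xd.
  by apply: data_eq => k kN; case: (Hdata k kN).
have AclP p : PP p -> Acl R nx nu np A0 Ai B0 Bi K0 Ki p *m P =
    (Em R nx np p)^T *m (Xplusblk np Xp *m FQ) *m Em R nx np p.
  move=> PPp.
  have e : Acl R nx nu np A0 Ai B0 Bi K0 Ki p *m P =
      Theta R nx nu np A0 Ai B0 Bi *m (MCL K0 Ki *m blkP P) *m Zm R nx np p.
    by rewrite -Theta_MCL_Z -!mulmxA blkP_Z.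
  rewrite e HM (mulmxA (Theta R nx nu np A0 Ai B0 Bi) (dataDp N ud pd xd) F) -Hd.
  rewrite -(mulmxA Xp F (Zm R nx np p)).
  have HF' : F *m Zm R nx np p = (ENm R np N p)^T *m FQ *m Em R nx np p := HF p PPp.
  by rewrite HF' !mulmxA Xp_EN.
have [c c0 Hc] := unif Hneg.
have key (q : 'cV[R]_np) : PP q -> forall v1 v2 : 'cV[R]_nx,
    c * sq v2 <= (v1^T *m P *m v1
      + v1^T *m (Acl R nx nu np A0 Ai B0 Bi K0 Ki q *m P) *m v2
      + v2^T *m (Acl R nx nu np A0 Ai B0 Bi K0 Ki q *m P)^T *m v1
      + v2^T *m P *m v2) 0 0.
  move=> PPp v1 v2; rewrite AclP //.
  set v := col_mx v1 v2.
  set w := DeltaP q *m (@L12m R nx np *m v).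
  have := Hc (col_mx w v).
  rewrite opprB qf_sub !qf_congr T_z S_z Wquad sq_col.
  have hpsd : 0 <= qf ((col_mx 1%:M (DeltaP q))^T *m Xi *m col_mx 1%:M (DeltaP q))
                  (@L12m R nx np *m v) := (Hpsd q PPp).2 _.
  rewrite qf_congr in hpsd.
  have sw := sq_ge0 w; have s1 := sq_ge0 v1.
  rewrite /v sq_col -/Xp => h.
  have c' : c * sq v2 <= c * (sq w + (sq v1 + sq v2)).
    by apply: ler_wpM2l; [exact: ltW | lra].
  lra.
move=> ps Hps.
have [K [rho [K0' rho0 rho1 HK]]] :=
  @stab R nx P c _ Pd c0 (fun k => key (ps k) (Hps k)).
have := concl K0' rho0 rho1 HK.
move=> [H1 H2]; split.
  move=> e e0; have [d d0 Hd'] := H1 e e0; exists d => // x0 hx k.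
  by rewrite cl_trajE; exact: Hd'.
move=> x0.
have -> : cl_traj A0 Ai B0 Bi K0 Ki ps x0 =
    trj R (fun k => Acl R nx nu np A0 Ai B0 Bi K0 Ki (ps k)) x0.
  by apply: funext => k; rewrite cl_trajE.
exact: H2.
Qed.
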